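(* Let $t,\ell,m$ be integers with $1 \le t \le \ell \le m$, and let $s$ be an integer with $(\ell-t)m \le s \le \ell m$ and $s\ge 1$. Then the $s$-th generalized Hamming weight of $\widehat{C}_{\det}(t;\ell,m)$ is $$\hat{d}_s=\hat{n}-\sum_{i=0}^{\ell m-s-1}q^i,$$ where $\hat n=|\widehat{\mathcal D}_t(\ell,m)|$ is the length of the code (the sum is empty, i.e. $0$, when $s=\ell m$).
   Context: $q$ is a prime power. Let $\widehat{\mathcal D}_t(\ell,m)\subset\mathbb{P}^{\ell m-1}(\mathbb{F}_q)=\mathbb{P}(\mathrm{Mat}_{\ell\times m}(\mathbb{F}_q))$ be the set of points $[M]$ with $M\ne 0$ and $\mathrm{rk}(M)\le t$; let $\hat n=|\widehat{\mathcal D}_t(\ell,m)|$, enumerate its points and choose representatives $M_1,\dots,M_{\hat n}$. The determinantal code $\widehat{C}_{\det}(t;\ell,m)\subseteq\mathbb{F}_q^{\hat n}$ is the set of vectors $(f(M_1),\dots,f(M_{\hat n}))$ for $f$ ranging over linear forms in the entries of an $\ell\times m$ matrix of indeterminates; it has dimension $\ell m$. For a linear code $C\subseteq\mathbb{F}_q^n$ and a subspace $D\subseteq C$, the support weight $\|D\|$ is the number of coordinates $i$ such that some $c\in D$ has $c_i\ne0$; the $s$-th generalized Hamming weight is $d_s(C)=\min\{\|D\|: D\subseteq C \text{ a subspace}, \dim D=s\}$. *)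

(* Defs.v *)
From HB Require Import structures.
From mathcomp Require Import all_boot all_order all_algebra all_field.
Set Implicit Arguments. Unset Strict Implicit. Unset Printing Implicit Defensive.
Import GRing.Theory.
Local Open Scope ring_scope.

Section Det.
Variables (F : finFieldType) (l m : nat).

(* R is a system of representatives of the points of the projective
   variety \hat D_t(l,m): every element of R is a nonzero matrix of rank <= t,
   and every nonzero matrix of rank <= t is a nonzero scalar multiple of
   exactly one element of R. *)
Definition is_rep_system (t : nat) (R : {set 'M[F]_(l, m)}) : Prop :=
  (forall M, M \in R -> M != 0 /\ (\rank M <= t)%N) /\
  (forall M : 'M[F]_(l, m), M != 0 -> (\rank M <= t)%N ->
     exists! N, N \in R /\ exists a : F, a != 0 /\ M = a *: N).

Definition ev (R : {set 'M[F]_(l, m)}) (A : 'M[F]_(l, m)) : 'rV[F]_#|R| :=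
  \row_(i < #|R|) \sum_(a < l) \sum_(b < m) A a b * (enum_val i : 'M[F]_(l, m)) a b.

Definition detcode (R : {set 'M[F]_(l, m)}) : {vspace 'rV[F]_#|R|} :=
  (<<[seq ev R A | A : 'M[F]_(l, m)]>>)%VS.

End Det.

Definition support_weight (F : finFieldType) (n : nat) (D : {vspace 'rV[F]_n}) : nat :=
  #|[set i : 'I_n | [exists c : 'rV[F]_n, (c \in D) && (c 0 i != 0)]]|.

Definition is_ghw (F : finFieldType) (n : nat) (C : {vspace 'rV[F]_n}) (s d : nat) : Prop :=
  (exists D : {vspace 'rV[F]_n}, (D <= C)%VS /\ \dim D = s /\ support_weight D = d) /\
  (forall D : {vspace 'rV[F]_n}, (D <= C)%VS -> \dim D = s -> (d <= support_weight D)%N).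

(* Main.v *)
Require Import Defs.
From HB Require Import structures.
From mathcomp Require Import all_boot all_order all_algebra all_field.
From mathcomp Require Import zify.
Set Implicit Arguments. Unset Strict Implicit. Unset Printing Implicit Defensive.
Import GRing.Theory.
Local Open Scope ring_scope.

Lemma geom_nat (q k : nat) : (0 < q)%N ->
  (q ^ k = (q - 1) * \sum_(i < k) q ^ i + 1)%N.
Proof.
move=> q0; elim: k => [|k IH]; first by rewrite big_ord0 muln0.
rewrite big_ord_recl /= expn0.
have -> : (\sum_(i < k) q ^ (bump 0 i) = q * \sum_(i < k) q ^ i)%N.
  by rewrite big_distrr /=; apply: eq_bigr => i _; rewrite /bump /= expnS.
rewrite expnS IH. nia.
Qed.

Lemma span_closedP (F : fieldType) (V : vectType F) (P : V -> Prop) (X : seq V) :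
  P 0 -> (forall a u v, P u -> P v -> P (a *: u + v)) ->
  (forall x, x \in X -> P x) -> forall v, v \in <<X>>%VS -> P v.
Proof.
move=> P0 Plin PX v Xv.
have := @coord_span F V _ (in_tuple X) v Xv => ->.
apply: (big_ind P) => //.
  by move=> u w Pu Pw; rewrite -[u]scale1r; apply: Plin.
move=> i _; rewrite -[_ *: _]addr0; apply: Plin => //; apply: PX.
by apply: mem_nth; exact: (ltn_ord i).
Qed.

Lemma card_rowspace (F : finFieldType) (k N : nat) (A : 'M[F]_(k, N)) :
  #|[set v : 'rV[F]_N | (v <= A)%MS]| = (#|F| ^ \rank A)%N.
Proof.
rewrite -[X in (_ ^ X)%N]mul1n -card_mx.
rewrite -(card_imset _ (row_free_inj (row_base_free A))).
apply: eq_card => v; rewrite inE; apply/idP/imsetP.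
  by rewrite -(eq_row_base A) => /submxP [x ->]; exists x.
by move=> [x _ ->]; apply: submx_trans (submxMl _ _) _; rewrite eq_row_base.
Qed.

Section S.
Variables (F : finFieldType) (l m : nat) (R : {set 'M[F]_(l, m)}).

Definition VS (Sp : {set 'I_l * 'I_m}) : {set 'M[F]_(l,m)} :=
  [set A : 'M[F]_(l,m) | [forall p in Sp, A p.1 p.2 == 0]].

Lemma card_VS Sp : #|VS Sp| = (#|F| ^ #|~: Sp|)%N.
Proof.
have -> : #|F| = #|(predT : pred F)| by apply: eq_card.
rewrite -(card_pffun_on (0 : F) (~: Sp)) -(card_imset _ (@val_inj _ _ 'M[F]_(l,m))).
apply: eq_card => f; apply/imsetP/pffun_onP.
  case=> A; rewrite inE => /forall_inP HA -> {f}; split => //.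
  apply/subsetP => p; rewrite !inE; apply: contra => pSp.
  by case: p pSp => a b /HA.
case=> /subsetP Hs _; exists (Matrix f) => //; rewrite inE.
apply/forall_inP => p pSp; apply/eqP; rewrite /fun_of_matrix /=.
case: p pSp => a b pSp /=; apply/eqP; apply/negPn/negP => H.
by have := Hs (a, b) H; rewrite !inE pSp.
Qed.

Lemma ev_lin a A B : ev R (a *: A + B) = a *: ev R A + ev R B.
Proof.
apply/rowP => i; rewrite !mxE mulr_sumr -big_split; apply: eq_bigr => x _.
rewrite mulr_sumr -big_split; apply: eq_bigr => y _ /=.
by rewrite !mxE mulrDl mulrA.
Qed.

Lemma ev0 : ev R 0 = 0.
Proof. by apply/rowP => i; rewrite !mxE big1 // => x _; rewrite big1 // => y _; rewrite mxE mul0r. Qed.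

Lemma VS_lin Sp a A B : A \in VS Sp -> B \in VS Sp -> a *: A + B \in VS Sp.
Proof.
rewrite !inE => /forall_inP HA /forall_inP HB; apply/forall_inP => p pS.
by rewrite !mxE (eqP (HA p pS)) (eqP (HB p pS)) mulr0 addr0.
Qed.

Lemma span_ev Sp v : v \in <<[seq ev R A | A <- enum (VS Sp)]>>%VS ->
  exists2 A, A \in VS Sp & v = ev R A.
Proof.
apply: (@span_closedP _ _ (fun v => exists2 A, A \in VS Sp & v = ev R A)).
- exists 0; last by rewrite ev0.
  by rewrite inE; apply/forall_inP => p _; rewrite mxE.
- move=> a u w [A HA ->] [B HB ->]; exists (a *: A + B); first exact: VS_lin.
  by rewrite ev_lin.
- by move=> x /mapP [A]; rewrite mem_enum => HA ->; exists A.
Qed.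

Lemma detcode_ev c : c \in detcode R -> exists A, c = ev R A.
Proof.
move=> Hc.
have : exists2 A, A \in VS set0 & c = ev R A.
  apply: (@span_closedP _ _ (fun v => exists2 A, A \in VS set0 & v = ev R A)) Hc.
  - exists 0; last by rewrite ev0.
    by rewrite inE; apply/forall_inP => p _; rewrite mxE.
  - move=> a u w [A HA ->] [B HB ->]; exists (a *: A + B); first exact: VS_lin.
    by rewrite ev_lin.
  - move=> x /mapP [A] _ ->; exists A => //.
    by rewrite inE; apply/forall_inP => p; rewrite inE.
by case=> A _ ->; exists A.
Qed.

Lemma ev_detcode A : ev R A \in detcode R.
Proof. by apply: memv_span; apply: map_f; rewrite mem_enum. Qed.

End S.

Section S3.
Variables (F : finFieldType) (l m : nat) (R : {set 'M[F]_(l, m)}) (t : nat).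
Hypothesis HR : is_rep_system t R.
Local Notation Mi i := (@enum_val _ (pred_of_set R) i).

Definition dot (A M : 'M[F]_(l,m)) := \sum_(a < l) \sum_(b < m) A a b * M a b.

Lemma evE A (i : 'I_#|R|) : ev R A 0 i = dot A (Mi i).
Proof. by rewrite mxE. Qed.

Lemma dot_deltal a b M : dot (delta_mx a b) M = M a b.
Proof.
rewrite /dot (bigD1 a) //= [X in _ + X]big1 ?addr0 => [|a' na]; last first.
  by apply: big1 => b' _; rewrite mxE (negbTE na) mul0r.
rewrite (bigD1 b) //= [X in _ + X]big1 ?addr0 => [|b' nb]; last first.
  by rewrite mxE eqxx (negbTE nb) mul0r.
by rewrite mxE !eqxx mul1r.
Qed.

Lemma dotZr A c M : dot A (c *: M) = c * dot A M.
Proof.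
rewrite /dot mulr_sumr; apply: eq_bigr => a _; rewrite mulr_sumr.
by apply: eq_bigr => b _; rewrite mxE mulrCA.
Qed.

Lemma dot_mxvec A M :
  \sum_k mxvec A 0 k * mxvec M 0 k = dot A M.
Proof.
rewrite /dot pair_bigA (reindex _ (curry_mxvec_bij _ _)) /=.
by apply: eq_bigr => [[a b]] _ /=; rewrite !mxvecE.
Qed.

Lemma rep_nz (i : 'I_#|R|) : (Mi i) != 0 /\ (\rank (Mi i) <= t)%N.
Proof. by apply: HR.1; apply: enum_valP. Qed.

Lemma rep_exists M : M != 0 -> (\rank M <= t)%N ->
  exists i : 'I_#|R|, exists2 c : F, c != 0 & M = c *: Mi i.
Proof.
move=> M0 Mt; have [N [[NR [c [c0 ->]]] _]] := HR.2 M M0 Mt.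
exists (enum_rank_in NR N); exists c => //; by rewrite enum_rankK_in.
Qed.

Lemma rep_uniq (i j : 'I_#|R|) a b : a != 0 ->
  a *: (Mi i) = b *: Mi j -> i = j /\ a = b.
Proof.
move=> a0 E.
have [Mi0 Mit] := rep_nz i.
have M0 : a *: (Mi i) != 0 by rewrite scaler_eq0 negb_or a0.
have Mt : (\rank (a *: (Mi i)) <= t)%N.
  exact: leq_trans (mxrank_scale _ _) Mit.
have b0 : b != 0 by apply: contraNneq M0 => b0; rewrite E b0 scale0r.
have [N [_ Nu]] := HR.2 _ M0 Mt.
have e1 := Nu (Mi i) (conj (enum_valP i) (ex_intro _ a (conj a0 erefl))).
have e2 := Nu (Mi j) (conj (enum_valP j) (ex_intro _ b (conj b0 E))).
have eij : i = j by apply: enum_val_inj; rewrite -e1 -e2.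
split=> //; subst j; apply/eqP; rewrite -subr_eq0.
have : (a - b) *: (Mi i) == 0 by rewrite scalerBl E subrr.
by rewrite scaler_eq0 (negbTE Mi0) orbF.
Qed.

Lemma ev_inj : (1 <= t)%N -> injective (ev R).
Proof.
move=> t1.
suff H0 : forall A, ev R A = 0 -> A = 0.
  move=> A B E; apply/eqP; rewrite -subr_eq0; apply/eqP; apply: H0.
  by rewrite -scaleN1r addrC ev_lin E scaleN1r addNr.
move=> A EA; apply/matrixP => a b; rewrite mxE.
have D0 : delta_mx a b != 0 :> 'M[F]_(l,m).
  by apply/eqP => /matrixP /(_ a b); rewrite !mxE !eqxx => /eqP; rewrite oner_eq0.
have Dt : (\rank (delta_mx a b : 'M[F]_(l,m)) <= t)%N by rewrite mxrank_delta.
have [i [c c0 Ec]] := rep_exists D0 Dt.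
have : dot A (delta_mx a b) = c * dot A (Mi i) by rewrite Ec dotZr.
rewrite -evE EA mxE mulr0.
rewrite /dot; under eq_bigr => a' _ do under eq_bigr => b' _ do rewrite mulrC.
by rewrite -/(dot _ _) dot_deltal.
Qed.

Lemma rank_rows (A : 'M[F]_(l,m)) : (t <= l)%N ->
  (forall (a : 'I_l) (b : 'I_m), (t <= a)%N -> A a b = 0) -> (\rank A <= t)%N.
Proof.
move=> tl HA.
have -> : A = (pid_mx t : 'M[F]_(l,l)) *m A.
  apply/matrixP => i j; rewrite mxE (bigD1 i) //= big1 ?addr0 => [|k nk].
    rewrite mxE eqxx /=; case: ltnP => it; first by rewrite mul1r.
    by rewrite mul0r HA.
  rewrite mxE; case: eqP => [ik|_]; last by rewrite mul0r.
  by move: nk; rewrite (val_inj ik) eqxx.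
by apply: leq_trans (mxrankM_maxl _ _) _; rewrite rank_pid_mx.
Qed.

End S3.

Section S4.
Variables (F : finFieldType) (l m : nat) (R : {set 'M[F]_(l, m)}) (t : nat).
Hypothesis HR : is_rep_system t R.
Local Notation Mi i := (@enum_val _ (pred_of_set R) i).

Definition Zs (D : {vspace 'rV[F]_#|R|}) :=
  [set i : 'I_#|R| | [forall c : 'rV[F]_#|R|, (c \in D) ==> (c 0 i == 0)]].

Lemma weight_Z D : (support_weight D + #|Zs D| = #|R|)%N.
Proof.
rewrite /support_weight.
have -> : Zs D = ~: [set i : 'I_#|R| | [exists c : 'rV[F]_#|R|, (c \in D) && (c 0 i != 0)]].
  apply/setP => i; rewrite !inE negb_exists; apply: eq_forallb => c.
  by rewrite negb_and implybE negbK.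
by rewrite cardsC card_ord.
Qed.

Lemma q_gt1 : (1 < #|F|)%N.
Proof. exact: card_finNzRing_gt1. Qed.

Lemma lower D : (D <= detcode R)%VS ->
  (#|R| <= support_weight D + \sum_(i < l * m - \dim D) #|F| ^ i)%N.
Proof.
move=> DC.
have HW := weight_Z D.
suff HZ : (#|Zs D| <= \sum_(i < l * m - \dim D) #|F| ^ i)%N by lia.
set Z := Zs D.
pose BV : 'M[F]_(#|R|, l * m) :=
  \matrix_(i, k) (if i \in Z then mxvec (Mi i) 0 k else 0).
have q1 := q_gt1.
have key : forall c, c \in D -> exists A, c = ev R A /\ (mxvec A <= kermx BV^T)%MS.
  move=> c cD; have [A EA] := detcode_ev (subvP DC _ cD); exists A; split => //.
  apply/sub_kermxP; apply/rowP => i; rewrite !mxE.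
  case: (boolP (i \in Z)) => iZ.
    under eq_bigr => k _ do rewrite !mxE iZ.
    rewrite dot_mxvec -evE -EA.
    by move: iZ; rewrite inE => /forallP /(_ c); rewrite cD /= => /eqP.
  by apply: big1 => k _; rewrite !mxE (negbTE iZ) mulr0.
have r_le : (\rank BV <= l * m - \dim D)%N.
  have : (#|F| ^ \dim D <= #|F| ^ (l * m - \rank BV))%N.
    rewrite -card_vspace -mxrank_tr -mxrank_ker -card_rowspace.
    apply: leq_trans (leq_imset_card (fun x => ev R (vec_mx x)) _).
    apply: subset_leq_card; apply/subsetP => c cD.
    have [A [-> HA]] := key c cD; apply/imsetP; exists (mxvec A).
      by rewrite inE.
    by rewrite mxvecK.
  rewrite leq_exp2l // => H.
  have := rank_leq_col BV; lia.
have Zle : (#|Z| * (#|F| - 1) <= #|F| ^ \rank BV - 1)%N.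
  rewrite subn1 -(cardsC1 (0 : F)) -cardsX.
  have -> : (#|F| ^ \rank BV - 1 = #|[set v : 'rV[F]_(l * m) | (v <= BV)%MS] :\ (0%R : 'rV[F]_(l * m))|)%N.
    by rewrite -card_rowspace (cardsD1 (0%R : 'rV[F]_(l * m))) inE sub0mx; lia.
  rewrite -(@card_in_imset _ _ (fun p : 'I_#|R| * F => p.2 *: mxvec (Mi p.1))).
    apply: subset_leq_card; apply/subsetP => v /imsetP [[i a]].
    rewrite in_setX /= => /andP [iZ]; rewrite in_setC1 => a0 ->; rewrite !inE /=.
    rewrite scaler_eq0 negb_or a0 mxvec_eq0 (rep_nz HR i).1 /=.
    apply: scalemx_sub.
    have -> : mxvec (Mi i) = row i BV by apply/rowP => k; rewrite !mxE iZ.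
    exact: row_sub.
  move=> [i a] [j b]; rewrite !inE => /andP [_ a0] _ /= E.
  have : a *: Mi i = b *: Mi j by apply: (can_inj (@mxvecK _ _ _)); rewrite !linearZ.
  by case/(rep_uniq HR a0) => /= -> ->.
have gq := geom_nat (l * m - \dim D) (ltnW q1).
have : (#|F| ^ \rank BV <= #|F| ^ (l * m - \dim D))%N by rewrite leq_exp2l.
move=> Hp.
have H2 : (#|Z| * (#|F| - 1) <= (\sum_(i < l * m - \dim D) #|F| ^ i) * (#|F| - 1))%N.
  lia.
by rewrite leq_pmul2r in H2; last by lia.
Qed.

End S4.

Section S5.
Variables (F : finFieldType) (l m : nat) (R : {set 'M[F]_(l, m)}) (t : nat).
Hypothesis HR : is_rep_system t R.
Local Notation Mi i := (@enum_val _ (pred_of_set R) i).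

Lemma choose_S0 k : (t <= l)%N -> (k <= t * m)%N ->
  exists S0 : {set 'I_l * 'I_m}, #|S0| = k /\ forall p, p \in S0 -> (p.1 < t)%N.
Proof.
move=> tl km.
pose T0 := setX [set widen_ord tl i | i : 'I_t] [set: 'I_m].
have cT0 : #|T0| = (t * m)%N.
  rewrite cardsX cardsT card_ord card_imset ?card_ord //.
  by move=> x y /(congr1 val) /= /val_inj.
exists [set x in take k (enum T0)]; split.
  have U : uniq (take k (enum T0)) by apply: take_uniq; exact: enum_uniq.
  rewrite cardsE (card_uniqP U).
  by rewrite size_takel // -cardE cT0.
move=> [a b]; rewrite inE => /mem_take; rewrite mem_enum in_setX => /andP [].
by case/imsetP => i _ -> _ /=.
Qed.

Lemma upper s : (1 <= t)%N -> (t <= l)%N -> ((l - t) * m <= s)%N -> (s <= l * m)%N ->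
  exists D : {vspace 'rV[F]_#|R|}, [/\ (D <= detcode R)%VS, \dim D = s &
    (support_weight D + \sum_(i < l * m - s) #|F| ^ i = #|R|)%N].
Proof.
move=> t1 tl ls sl.
have q1 := @q_gt1 F.
have km : (l * m - s <= t * m)%N.
  have : ((l - t) * m + t * m = l * m)%N by rewrite -mulnDl subnK.
  lia.
have [S0 [cS0 S0t]] := choose_S0 tl km.
pose D : {vspace 'rV[F]_#|R|} := <<[seq ev R A | A <- enum (VS F S0)]>>%VS.
have memD : forall v, (v \in D) = (v \in [set ev R A | A in VS F S0]).
  move=> v; apply/idP/imsetP.
    by case/span_ev => A HA ->; exists A.
  by case=> A HA ->; apply: memv_span; apply: map_f; rewrite mem_enum.
have cC : #|~: S0| = s.
  have := cardsC S0; rewrite card_prod !card_ord cS0; lia.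
exists D; split.
- by apply/span_subvP => v /mapP [A _ ->]; exact: ev_detcode.
- apply/eqP; rewrite -(eqn_exp2l _ _ q1) -card_vspace (eq_card memD).
  by rewrite card_in_imset ?card_VS ?cC //; apply: in2W; apply: ev_inj HR t1.
have HZ : Zs D = [set i | Mi i \in VS F (~: S0)].
  apply/setP => i; rewrite !inE; apply/forallP/idP.
    move=> H; apply/forall_inP => p pS.
    have := H (ev R (delta_mx p.1 p.2)); rewrite memD.
    rewrite imset_f; last first.
      rewrite inE; apply/forall_inP => p' p'S; rewrite mxE.
      have ne : p' != p by apply: contraTneq pS => <-; rewrite inE p'S.
      move: ne; case: p' p'S => a' b' _; case: p pS => a b _ ne /=.
      by rewrite -xpair_eqE (negbTE ne) mulr0n.
    by rewrite /= evE dot_deltal.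
  move=> HM c; apply/implyP; rewrite memD => /imsetP [A HA ->].
  rewrite evE; apply/eqP; apply: big1 => a _; apply: big1 => b _.
  case: (boolP ((a, b) \in S0)) => H.
    by move: HA; rewrite inE => /forall_inP /(_ _ H) /eqP ->; rewrite mul0r.
  by move/forall_inP: HM => /(_ (a, b)); rewrite inE H => /(_ isT) /eqP ->; rewrite mulr0.
have VS0 : forall Sp, (0 : 'M[F]_(l,m)) \in VS F Sp.
  by move=> Sp; rewrite inE; apply/forall_inP => p _; rewrite mxE.
have cnt : (#|Zs D| * (#|F| - 1) = #|F| ^ (l * m - s) - 1)%N.
  rewrite subn1 -(cardsC1 (0 : F)) -cardsX.
  have -> : (#|F| ^ (l * m - s) - 1 = #|VS F (~: S0) :\ (0%R : 'M[F]_(l,m))|)%N.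
    by rewrite -cS0 -{1}(setCK S0) -card_VS (cardsD1 (0%R : 'M[F]_(l,m))) VS0 /= add1n subn1.
  rewrite -(@card_in_imset _ _ (fun p : 'I_#|R| * F => p.2 *: Mi p.1)).
    apply: eq_card => A; apply/imsetP/idP.
      case=> [[i a]]; rewrite in_setX /= => /andP [iZ]; rewrite in_setC1 => a0 ->.
      rewrite in_setD1 scaler_eq0 negb_or a0 (rep_nz HR i).1 /=.
      rewrite -[_ *: _]addr0; apply: VS_lin => //.
      by move: iZ; rewrite HZ inE.
    rewrite in_setD1 => /andP [A0 HA].
    have At : (\rank A <= t)%N.
      apply: rank_rows => // a b ta.
      move: HA; rewrite inE => /forall_inP /(_ (a, b)); rewrite inE.
      case: (boolP ((a, b) \in S0)) => H; first by have := S0t _ H; rewrite /= ltnNge ta.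
      by move=> /(_ isT) /eqP.
    have [i [c c0 Ec]] := rep_exists HR A0 At.
    exists (i, c) => //; rewrite in_setX in_setC1 c0 andbT HZ inE /=.
    have -> : Mi i = c^-1 *: A by rewrite Ec scalerA mulVf // scale1r.
    by rewrite -[_ *: _]addr0; apply: VS_lin.
  move=> [i a] [j b]; rewrite !inE => /andP [_ a0] _ /= E.
  by case/(rep_uniq HR a0): E => /= -> ->.
have gq := geom_nat (l * m - s) (ltnW q1).
have HW := weight_Z D.
have : (#|Zs D| * (#|F| - 1) = (\sum_(i < l * m - s) #|F| ^ i) * (#|F| - 1))%N.
  rewrite cnt; lia.
move/eqP; rewrite eqn_pmul2r; last by lia.
move/eqP => <-; exact: HW.
Qed.

End S5.

Theorem mainTheorem10 (F : finFieldType) (t l m s : nat)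
    (R : {set 'M[F]_(l, m)}) :
  (1 <= t)%N -> (t <= l)%N -> (l <= m)%N ->
  ((l - t) * m <= s)%N -> (s <= l * m)%N -> (1 <= s)%N ->
  is_rep_system t R ->
  exists d : nat, is_ghw (detcode R) s d /\
    (d + \sum_(i < l * m - s) #|F| ^ i = #|R|)%N.
Proof.
move=> t1 tl lm ls sl s1 HR.
have [D [DC dD HD]] := upper HR t1 tl ls sl.
exists (support_weight D); split; last exact: HD.
split; first by exists D.
move=> D' D'C dD'.
have := lower HR D'C; rewrite dD'; lia.
Qed.
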